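(* Let $\mathrm{A}$ be admissible with parameter $\tau>0$ and let $s\geq0$. There exists $C>0$ (depending on $d$, $s$, $\mathrm{A}$) such that for all $\alpha\geq\alpha_{0}$, all $n\in\mathscr{C}_{\alpha}$ and all $(n_{1},n_{2},n_{3})\in(\mathbb{Z}^{d})^{3}\setminus(\Lambda^{(1)}(n)\cup\Lambda^{(3)}(n))$ with $n_{1}-n_{2}+n_{3}=n$ and $\Omega(\vec{n})\neq0$, \[ \frac{K_{\alpha}^{s}}{|\Omega(\vec{n})|}\leq C(n_{1}^{\ast})^{s}(n_{2}^{\ast})^{\frac{4\tau}{c(d)}} . \]
   Context: $\mathrm{A}$ is a real symmetric positive definite $d\times d$ matrix, $\lambda_{n}^{2}=n^{\intercal}\mathrm{A}n$, $|n|$ Euclidean norm. $\mathrm{A}$ is admissible with parameter $\tau$ if there is $c>0$ with $|a^{\intercal}\mathrm{A}b|\geq c|a|^{-\tau}|b|^{-\tau}$ for all nonzero $a,b\in\mathbb{Z}^{d}$. $\Omega(\vec{n})=\lambda_{n_{1}}^{2}-\lambda_{n_{2}}^{2}+\lambda_{n_{3}}^{2}-\lambda_{n}^{2}$; $n_{1}^{\ast}\geq n_{2}^{\ast}\geq n_{3}^{\ast}$ is the decreasing rearrangement of $|n_{1}|,|n_{2}|,|n_{3}|$. By a known result (Berti–Maspero), there exist $c(d)\in(0,2]$, $C(\mathrm{A},d)\geq2$ and a partition $(\mathscr{C}_{\alpha})_{\alpha\geq0}$ of $\mathbb{Z}^{d}$ with (i) $0\in\mathscr{C}_{0}$, $\max_{\mathscr{C}_{0}}|n|\leq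 C(\mathrm{A},d)$; (ii) $\max_{\mathscr{C}_{\alpha}}|n|\leq2\min_{\mathscr{C}_{\alpha}}|n|$ for $\alpha\geq1$; (iii) for $n_{1}\in\mathscr{C}_{\alpha_{1}},n_{2}\in\mathscr{C}_{\alpha_{2}}$, $\alpha_{1}\neq\alpha_{2}$: $|n_{1}-n_{2}|+|\lambda_{n_{1}}^{2}-\lambda_{n_{2}}^{2}|>(|n_{1}|+|n_{2}|)^{c(d)}$; such a partition and $c(d)$ are fixed. $K_{\alpha}=\min_{n\in\mathscr{C}_{\alpha}}|n|$ ($\alpha\geq1$), $\alpha_{0}=\min\{\alpha\geq1:K_{\alpha}\geq10^{10}C(\mathrm{A},d)\}$. For $n\in\mathscr{C}_{\alpha}$, $\alpha\geq\alpha_0$: $\Lambda^{(1)}(n)$ is the set of $(n_1,n_2,n_3)$ with $n_{1}-n_{2}+n_{3}=n$, $|\Omega(\vec n)|<1$, $n_{1}\in\mathscr{C}_{\alpha}$, $|n_{2}|,|n_{3}|<10^{-5}K_{\alpha}$; $\Lambda^{(3)}(n)$ is defined likewise with $n_{3}\in\mathscr{C}_{\alpha}$ and $|n_{1}|,|n_{2}|<10^{-5}K_{\alpha}$. *)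

(* Defs.v *)
From HB Require Import structures.
From mathcomp Require Import all_boot all_order all_algebra.
From mathcomp Require Import classical_sets reals exp.
Set Implicit Arguments. Unset Strict Implicit. Unset Printing Implicit Defensive.
Import Order.TTheory GRing.Theory Num.Theory.
Local Open Scope ring_scope.
Local Open Scope classical_set_scope.

Section Defs.
Variables (R : realType) (d : nat).
Implicit Types (A : 'M[R]_d) (n m : 'rV[int]_d).

Definition vR n : 'rV[R]_d := map_mx (fun z : int => z%:~R) n.

Definition nrm n : R := Num.sqrt (\sum_(i < d) ((n ord0 i)%:~R : R) ^+ 2).

Definition bform A n m : R := (vR n *m A *m (vR m)^T) ord0 ord0.

Definition lam2 A n : R := bform A n n.

Definition spd A : Prop :=
  A^T = A /\ forall x : 'rV[R]_d, x != 0 -> 0 < (x *m A *m x^T) ord0 ord0.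

Definition admissible A (tau : R) : Prop :=
  exists c : R, 0 < c /\ forall a b : 'rV[int]_d, a != 0 -> b != 0 ->
    c * (nrm a `^ (- tau)) * (nrm b `^ (- tau)) <= `|bform A a b|.

Definition Omega A n1 n2 n3 n : R := lam2 A n1 - lam2 A n2 + lam2 A n3 - lam2 A n.

(* the partition (C_alpha)_{alpha>=0} is encoded by the class-index map
   cls : Z^d -> nat, C_alpha = cls^{-1}(alpha); blocks nonempty (surjectivity). *)
Definition BM_partition A (c CA : R) (cls : 'rV[int]_d -> nat) : Prop :=
  [/\ (forall alpha : nat, exists n, cls n = alpha),
      cls 0 = 0%N,
      (forall n, cls n = 0%N -> nrm n <= CA),
      (forall (alpha : nat) n m, (1 <= alpha)%N -> cls n = alpha -> cls m = alpha ->
          nrm n <= 2 * nrm m) &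
      (forall n1 n2, cls n1 <> cls n2 ->
          (nrm n1 + nrm n2) `^ c < nrm (n1 - n2) + `|lam2 A n1 - lam2 A n2|)].

Definition Kal (cls : 'rV[int]_d -> nat) (alpha : nat) : R :=
  inf [set nrm n | n in [set m | cls m = alpha]].

Definition is_alpha0 (CA : R) (cls : 'rV[int]_d -> nat) (alpha0 : nat) : Prop :=
  [/\ (1 <= alpha0)%N, 10 ^+ 10 * CA <= Kal cls alpha0 &
      forall beta : nat, (1 <= beta)%N -> 10 ^+ 10 * CA <= Kal cls beta ->
        (alpha0 <= beta)%N].

Definition Lambda1 A cls (alpha : nat) n n1 n2 n3 : Prop :=
  [/\ n1 - n2 + n3 = n, `|Omega A n1 n2 n3 n| < 1, cls n1 = alpha,
      nrm n2 < 10 ^- 5 * Kal cls alpha & nrm n3 < 10 ^- 5 * Kal cls alpha].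

Definition Lambda3 A cls (alpha : nat) n n1 n2 n3 : Prop :=
  [/\ n1 - n2 + n3 = n, `|Omega A n1 n2 n3 n| < 1, cls n3 = alpha,
      nrm n1 < 10 ^- 5 * Kal cls alpha & nrm n2 < 10 ^- 5 * Kal cls alpha].

End Defs.
Arguments Kal {R d}.
Arguments nrm {R d}.
Arguments vR {R d}.
Arguments is_alpha0 {R d}.

Definition star1 {R : realType} (a b c : R) : R := Num.max a (Num.max b c).
Definition star3 {R : realType} (a b c : R) : R := Num.min a (Num.min b c).
Definition star2 {R : realType} (a b c : R) : R := a + b + c - star1 a b c - star3 a b c.

Definition brk {R : realType} (x : R) : R := Num.max 1 x.

(* Main.v *)
Require Import Defs.
From HB Require Import structures.
From mathcomp Require Import all_boot all_order all_algebra.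
From mathcomp Require Import classical_sets reals exp.
From mathcomp Require Import all_classical all_reals all_analysis.
From mathcomp Require Import ring lra.
Import Order.TTheory GRing.Theory Num.Theory.
Import numFieldNormedType.Exports.
Local Open Scope ring_scope.

Local Open Scope classical_set_scope.
Set Implicit Arguments. Unset Strict Implicit.
Lemma qform_expand (R : realType) d (A : 'M[R]_d) (x : 'rV[R]_d) :
  (x *m A *m x^T) ord0 ord0 = \sum_j (\sum_i x ord0 i * A i j) * x ord0 j.
Proof. rewrite !mxE; apply: eq_bigr => j _; by rewrite !mxE. Qed.

Lemma addR_cont (R : realType) : continuous (fun x : R * R => x.1 + x.2).
Proof. exact: add_continuous. Qed.

Lemma qform_cont (R : realType) d (A : 'M[R]_d) :
  continuous (fun x : 'rV[R]_d => (x *m A *m x^T) ord0 ord0).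
Proof.
have -> : (fun x : 'rV[R]_d => (x *m A *m x^T) ord0 ord0) =
   (fun x => \sum_j (\sum_i x ord0 i * A i j) * x ord0 j).
  by apply: funext => x; rewrite qform_expand.
apply: (@continuous_big R _ +%R 0 xpredT (@addR_cont R)).
move=> j _ x; apply: continuousM; last exact: coord_continuous.
move: x; apply: (@continuous_big R _ +%R 0 xpredT (@addR_cont R)).
move=> i _ x; apply: continuousM; first exact: coord_continuous.
exact: cst_continuous.
Qed.

Lemma qformZ (R : realType) d (A : 'M[R]_d) (a : R) (x : 'rV[R]_d) :
  ((a *: x) *m A *m (a *: x)^T) ord0 ord0 = a ^+ 2 * (x *m A *m x^T) ord0 ord0.
Proof.
by rewrite linearZ /= -scalemxAl -scalemxAl -scalemxAr !mxE mulrA expr2.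
Qed.

Lemma coercive (R : realType) d (A : 'M[R]_d) :
  (forall x : 'rV[R]_d, x != 0 -> 0 < (x *m A *m x^T) ord0 ord0) ->
  exists2 mu : R, 0 < mu &
    forall x : 'rV[R]_d, mu * `|x| ^+ 2 <= (x *m A *m x^T) ord0 ord0.
Proof.
move=> Apos.
have [[x0 x0n0]|all0] := pselect (exists x : 'rV[R]_d, x != 0); last first.
  exists 1 => // x; have -> : x = 0.
    by apply/eqP/negPn/negP => xn0; apply: all0; exists x.
  by rewrite normr0 expr0n /= mulr0 !mul0mx mxE.
pose S := [set x : 'rV[R]_d | `|x| = 1].
have S0 : S !=set0.
  exists (`|x0|^-1 *: x0); rewrite /S /= normrZ normrV ?unitfE ?normr_eq0 //.
  by rewrite normr_id mulVf // normr_eq0.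
have cS : compact S.
  apply: bounded_closed_compact.
    rewrite /= /bounded_near; exists 1; split => // M M1 t /= St.
    by rewrite St ltW.
  have -> : S = (fun x : 'rV[R]_d => `|x|) @^-1` [set y : R | y = 1] by [].
  apply: preimage_closed; last exact: closed_eq.
  move=> y _; exact: norm_continuous.
have [c cS' cmin] := compact_EVT_min S0 cS
  (continuous_subspaceT (@qform_cont R d A)).
have cn0 : c != 0.
  move: cS'; rewrite inE /S /= => c1; apply/eqP => c0.
  by move: c1; rewrite c0 normr0 => /eqP; rewrite eq_sym oner_eq0.
exists ((c *m A *m c^T) ord0 ord0); first exact: Apos.
move=> x; have [->|xn0] := eqVneq x 0.
  by rewrite normr0 expr0n /= mulr0 !mul0mx mxE.
have xS : (`|x|^-1 *: x) \in S.
  rewrite inE /S /= normrZ normrV ?unitfE ?normr_eq0 //.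
  by rewrite normr_id mulVf // normr_eq0.
have := cmin _ xS; rewrite qformZ => h.
have nx : 0 < `|x| ^+ 2 by rewrite exprn_gt0 // normr_gt0.
by rewrite -ler_pdivlMr // mulrC -exprVn.
Qed.

Section H.
Variables (R : realType) (d : nat).
Implicit Types (A : 'M[R]_d) (a b n m : 'rV[int]_d).

Lemma vRD a b : vR (a + b) = vR a + vR b :> 'rV[R]_d.
Proof. by apply/matrixP => i j; rewrite !mxE intrD. Qed.
Lemma vRN a : vR (- a) = - vR a :> 'rV[R]_d.
Proof. by apply/matrixP => i j; rewrite !mxE intrN. Qed.
Lemma vRB a b : vR (a - b) = vR a - vR b :> 'rV[R]_d.
Proof. by rewrite vRD vRN. Qed.
Lemma vR0 : vR 0 = 0 :> 'rV[R]_d.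
Proof. by apply/matrixP => i j; rewrite !mxE. Qed.

Definition qf A (x y : 'rV[R]_d) : R := (x *m A *m y^T) ord0 ord0.

Lemma qfDl A x y z : qf A (x + y) z = qf A x z + qf A y z.
Proof. by rewrite /qf !mulmxDl mxE. Qed.
Lemma qfDr A x y z : qf A z (x + y) = qf A z x + qf A z y.
Proof. by rewrite /qf linearD /= mulmxDr mxE. Qed.
Lemma qfNl A x z : qf A (- x) z = - qf A x z.
Proof. by rewrite /qf !mulNmx mxE. Qed.
Lemma qfNr A x z : qf A z (- x) = - qf A z x.
Proof. by rewrite /qf linearN /= mulmxN mxE. Qed.
Lemma qf0l A z : qf A 0 z = 0.
Proof. by rewrite /qf !mul0mx mxE. Qed.
Lemma qfsym A x y : A^T = A -> qf A x y = qf A y x.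
Proof.
move=> sA; rewrite /qf.
have -> : (x *m A *m y^T) ord0 ord0 = ((x *m A *m y^T)^T) ord0 ord0 by rewrite [RHS]mxE.
by rewrite !trmx_mul trmxK sA mulmxA.
Qed.

Lemma Omega_id A n1 n2 n3 : A^T = A ->
  Omega A n1 n2 n3 (n1 - n2 + n3) = 2 * bform A (n1 - n2) (n2 - n3).
Proof.
move=> sA; rewrite /Omega /lam2 /bform -!/(qf _ _ _) !vRD !vRN.
set u := vR n1; set v := vR n2; set w := vR n3.
rewrite !(qfDl, qfDr, qfNl, qfNr).
rewrite (qfsym v u) // (qfsym w u) // (qfsym w v) //.
lra.
Qed.

Lemma nrm_ge0 n : 0 <= nrm (R:=R) n.
Proof. exact: sqrtr_ge0. Qed.

Lemma nrm_sq n : nrm (R:=R) n ^+ 2 = \sum_(i < d) ((n ord0 i)%:~R : R) ^+ 2.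
Proof. by rewrite /nrm sqr_sqrtr // sumr_ge0 // => i _; rewrite sqr_ge0. Qed.

Lemma coord_le_nrm n i : `|((n ord0 i)%:~R : R)| <= nrm (R:=R) n.
Proof.
rewrite -sqrtr_sqr /nrm ler_sqrt; last by rewrite sumr_ge0 // => j _; rewrite sqr_ge0.
rewrite (bigD1 i) //= lerDl sumr_ge0 // => j _; exact: sqr_ge0.
Qed.

Lemma mxcoord_le (x : 'rV[R]_d) i : `|x ord0 i| <= `|x|.
Proof.
rewrite [X in _ <= X]/Num.norm /= mx_normrE.
exact: (le_bigmax _ (fun ij : 'I_1 * 'I_d => `|x ij.1 ij.2|) (ord0, i)).
Qed.

Lemma vR_le_nrm n : `|vR n : 'rV[R]_d| <= nrm n.
Proof.
rewrite [X in X <= _]/Num.norm /= mx_normrE.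
apply: bigmax_le => [|[i j] _]; first exact: nrm_ge0.
by rewrite /vR mxE (ord1 i) coord_le_nrm.
Qed.

Lemma nrm_sq_le n : nrm (R:=R) n ^+ 2 <= d%:R * `|vR n : 'rV[R]_d| ^+ 2.
Proof.
rewrite nrm_sq; have -> : d%:R * `|vR n : 'rV[R]_d| ^+ 2 =
   \sum_(i < d) `|vR n : 'rV[R]_d| ^+ 2 by rewrite sumr_const card_ord mulr_natl.
apply: ler_sum => i _; rewrite -real_normK ?num_real //.
rewrite ler_sqr ?nnegrE //; have := mxcoord_le (vR n) i; by rewrite /vR mxE.
Qed.

Lemma nrm_pos n : n != 0 -> 0 < nrm (R:=R) n.
Proof.
move=> nn0; have [i ni] : exists i, n ord0 i != 0.
  apply/existsP; apply: contraNT nn0; rewrite negb_exists => /forallP h.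
  apply/eqP/matrixP => i j; rewrite (ord1 i) mxE; exact/eqP/negPn/h.
apply: lt_le_trans (coord_le_nrm n i); by rewrite normr_gt0 intr_eq0.
Qed.

Lemma nrm0 : nrm (R:=R) (0 : 'rV[int]_d) = 0.
Proof. by rewrite /nrm big1 ?sqrtr0 // => i _; rewrite mxE expr0n. Qed.

Lemma nrm_tri3 a b c : (1 <= d)%N ->
  nrm (R:=R) (a - b + c) <= d%:R * (nrm a + nrm b + nrm c).
Proof.
move=> d1; have h1 := nrm_sq_le (a - b + c).
rewrite vRD vRB in h1.
have h2 : `|vR a - vR b + vR c : 'rV[R]_d| <= nrm a + nrm b + nrm c.
  apply: le_trans (ler_normD _ _) _; apply: lerD; last exact: vR_le_nrm.
  apply: le_trans (ler_normB _ _) _; apply: lerD; exact: vR_le_nrm.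
have D1 : 1 <= (d%:R : R) by rewrite ler1n.
have S0 : 0 <= nrm (R:=R) a + nrm b + nrm c by rewrite !addr_ge0 // nrm_ge0.
rewrite -(ler_sqr (nrm_ge0 _)); last by rewrite nnegrE mulr_ge0 // (le_trans _ D1).
apply: le_trans h1 _; rewrite exprMn ler_pM //; last first.
  by rewrite ler_sqr ?nnegrE //.
by rewrite expr2 ler_peMl // le_trans D1.
Qed.

Lemma nrm_tri2 a b : (1 <= d)%N ->
  nrm (R:=R) (a - b) <= d%:R * (nrm a + nrm b).
Proof.
move=> d1; have := nrm_tri3 a b 0 d1; by rewrite addr0 nrm0 addr0.
Qed.

Definition Msum A : R := \sum_j \sum_i `|A i j|.

Lemma Msum_ge0 A : 0 <= Msum A.
Proof. by rewrite /Msum; apply: sumr_ge0 => j _; apply: sumr_ge0. Qed.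

Lemma qbound A (x : 'rV[R]_d) : `|qf A x x| <= Msum A * `|x| ^+ 2.
Proof.
rewrite /qf /Msum !mxE mulr_suml.
apply: le_trans (ler_norm_sum _ _ _) _; apply: ler_sum => j _.
rewrite !mxE normrM mulr_suml.
apply: le_trans (ler_pM _ _ (ler_norm_sum _ _ _) (mxcoord_le x j)) _ => //.
rewrite mulr_suml; apply: ler_sum => i _.
rewrite normrM; have hxi := mxcoord_le x i.
have h : `|x| * `|x ord0 i| * `|A i j| <= `|x| * `|x| * `|A i j|.
  by rewrite ler_wpM2r // ler_wpM2l.
apply: le_trans (le_trans _ h) _; rewrite le_eqVlt; apply/orP; left; apply/eqP; ring.
Qed.
End H.

Section S.
Variable R : realType.
Implicit Types a b c : R.

Ltac starcase a b c :=
  rewrite /star2 /star1 /star3;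
  case: (leP b c) => ?; case: (leP a b) => ?; case: (leP a c) => ?;
  rewrite ?maxEle ?minEle;
  repeat (case: ifPn => /=; rewrite -?ltNge => ?); lra.

Lemma star_le1 a b c : [/\ a <= star1 a b c, b <= star1 a b c & c <= star1 a b c].
Proof. by split; starcase a b c. Qed.

Lemma star3_le2 a b c : star3 a b c <= star2 a b c.
Proof. starcase a b c. Qed.

Lemma star3_ge a b c : 1 <= a -> 1 <= b -> 1 <= c -> 1 <= star3 a b c.
Proof. move=> *; starcase a b c. Qed.

Lemma star_split a b c : star2 a b c < star1 a b c ->
  [\/ [/\ a = star1 a b c, b <= star2 a b c & c <= star2 a b c],
      [/\ b = star1 a b c, a <= star2 a b c & c <= star2 a b c] |
      [/\ c = star1 a b c, a <= star2 a b c & b <= star2 a b c]].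
Proof.
rewrite /star2 /star1 /star3;
  case: (leP b c) => ?; case: (leP a b) => ?; case: (leP a c) => ?;
  rewrite ?maxEle ?minEle;
  repeat (case: ifPn => /=; rewrite -?ltNge => ?) => h.
all: try (constructor 1; split; lra).
all: try (constructor 2; split; lra).
all: try (constructor 3; split; lra).
all: lra.
Qed.
End S.

Section K.
Variables (R : realType) (d : nat) (cls : 'rV[int]_d -> nat).

Lemma nrm_ge0' (n : 'rV[int]_d) : 0 <= nrm (R:=R) n.
Proof. exact: sqrtr_ge0. Qed.

Lemma Kal_hlb alpha : has_lbound [set nrm (R:=R) n | n in [set m | cls m = alpha]].
Proof. by exists 0 => _ [m _ <-]; exact: nrm_ge0'. Qed.

Lemma Kal_le alpha n : cls n = alpha -> Kal (R:=R) cls alpha <= nrm n.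
Proof. by move=> h; apply: (ge_inf (Kal_hlb alpha)); exists n. Qed.

Lemma Kal_ge0 alpha n : cls n = alpha -> 0 <= Kal (R:=R) cls alpha.
Proof.
move=> h; apply: lb_le_inf; first by exists (nrm n); exists n.
by move=> _ [m _ <-]; exact: nrm_ge0'.
Qed.

Lemma Kal_ge alpha x n : cls n = alpha ->
  (forall m, cls m = alpha -> x <= nrm (R:=R) m) -> x <= Kal (R:=R) cls alpha.
Proof.
move=> h hx; apply: lb_le_inf; first by exists (nrm n); exists n.
by move=> _ [m hm <-]; exact: hx.
Qed.
End K.

Lemma brk_ge1 (R : realType) (x : R) : 1 <= brk x.
Proof. by rewrite /brk le_max lexx. Qed.
Lemma brk_ge (R : realType) (x : R) : x <= brk x.
Proof. by rewrite /brk le_max lexx orbT. Qed.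
Lemma brk_eq (R : realType) (x : R) : 1 < brk x -> brk x = x.
Proof. by rewrite /brk; case: (leP 1 x) => // _; rewrite ltxx. Qed.

Lemma powle (R : realType) (a b r : R) : 0 <= r -> 0 <= a -> a <= b -> a `^ r <= b `^ r.
Proof. move=> r0 a0 ab; apply: ge0_ler_powR => //; rewrite nnegrE //; exact: le_trans ab. Qed.

Lemma gid1 d (n1 n2 n3 : 'rV[int]_d) : n1 - (n1 - n2 + n3) = n2 - n3.
Proof. by rewrite opprD opprB addrA addrCA subrr addr0. Qed.
Lemma gid3 d (n1 n2 n3 : 'rV[int]_d) : n3 - (n1 - n2 + n3) = n2 - n1.
Proof. by rewrite opprD opprB addrA addrC addrA addNr add0r. Qed.

Lemma bform0l (R : realType) d (A : 'M[R]_d) (v : 'rV[int]_d) : bform A 0 v = 0.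
Proof. by rewrite /bform vR0 !mul0mx mxE. Qed.
Lemma bform0r (R : realType) d (A : 'M[R]_d) (v : 'rV[int]_d) : bform A v 0 = 0.
Proof. by rewrite /bform vR0 trmx0 mulmx0 mxE. Qed.
Local Close Scope classical_set_scope.
Unset Implicit Arguments. Set Strict Implicit.

Theorem lemma2p10 (R : realType) (d : nat) (A : 'M[R]_d) (tau s c CA : R)
    (cls : 'rV[int]_d -> nat) :
  spd A -> admissible A tau -> 0 < tau -> 0 <= s ->
  0 < c -> c <= 2 -> 2 <= CA -> BM_partition A c CA cls ->
  exists C : R, 0 < C /\
    forall alpha0 : nat, is_alpha0 CA cls alpha0 ->
    forall (alpha : nat) (n n1 n2 n3 : 'rV[int]_d),
      (alpha0 <= alpha)%N -> cls n = alpha ->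
      ~ Lambda1 A cls alpha n n1 n2 n3 -> ~ Lambda3 A cls alpha n n1 n2 n3 ->
      n1 - n2 + n3 = n -> Omega A n1 n2 n3 n != 0 ->
      Kal cls alpha `^ s / `|Omega A n1 n2 n3 n|
        <= C * (star1 (brk (nrm n1)) (brk (nrm n2)) (brk (nrm n3))) `^ s
             * (star2 (brk (nrm n1)) (brk (nrm n2)) (brk (nrm n3))) `^ (4 * tau / c).
Proof.
move=> [sA Apos] [c0 [c0pos adm]] tau0 s0 cpos c2 CA2 BM.
case: BM => surj cls0 cls0b clsii clsiii.
have d1 : (1 <= d)%N.
  rewrite lt0n; apply/negP => /eqP d0.
  have [m hm] := surj 1%N.
  have m0 : m = 0 by apply/matrixP => i j; exfalso; have := ltn_ord j; move: (nat_of_ord j) => k; rewrite d0.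
  by move: hm; rewrite m0 cls0.
have [mu mu0 cmu] := coercive Apos.
pose D : R := d%:R.
have D1 : 1 <= D by rewrite ler1n.
have D0 : 0 < D by apply: lt_le_trans D1.
pose M := Msum A.
have M0 : 0 <= M := Msum_ge0 A.
have lam_lb : forall m, (mu / D) * nrm m ^+ 2 <= lam2 A m.
  move=> m; rewrite mulrAC ler_pdivrMr // mulrC.
  rewrite mulrC; apply: le_trans (ler_wpM2l (ltW mu0) (nrm_sq_le R m)) _.
  rewrite mulrA [mu * _]mulrC -mulrA [lam2 A m * _]mulrC ler_wpM2l ?(ltW D0) //.
have lam_ub : forall m, `|lam2 A m| <= M * nrm m ^+ 2.
  move=> m; apply: le_trans (qbound A (vR m)) _.
  by rewrite ler_wpM2l // ler_sqr ?nnegrE ?(nrm_ge0 R) // (vR_le_nrm R).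
pose B : R := 2 * D + 2 * M + 1.
have B0 : 0 <= B by rewrite /B; lra.
pose Q : R := 10 ^+ 5.
have Q0 : 0 < Q by rewrite /Q exprn_gt0.
pose L : R := Num.max (2 * Q) (Num.max (B `^ c^-1) ((2 * M + 1) * D / mu)).
have LQ : 2 * Q <= L by rewrite /L le_max lexx.
have L1 : 1 <= L.
  apply: le_trans LQ; rewrite /Q; have : (1 : R) <= 10 ^+ 5 by rewrite exprn_ege1 // ler1n.
  lra.
have LB : B <= L `^ c.
  have h1 : B `^ c^-1 <= L by rewrite /L !le_max lexx orbT.
  have := ge0_ler_powR (ltW cpos) _ _ h1; rewrite !nnegrE powR_ge0 => /(_ isT).
  rewrite -powRrM mulVf ?gt_eqF // powRr1 //.
  by move=> h; apply: h; apply: le_trans L1.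
have LM : 2 * M + 1 <= (mu / D) * L.
  have h1 : (2 * M + 1) * D / mu <= L by rewrite /L !le_max lexx !orbT.
  rewrite ler_pdivrMr // in h1.
  by rewrite mulrAC ler_pdivlMr // [mu * L]mulrC.
pose P : R := 2 * D * L.
have P0 : 0 < P by rewrite /P !mulr_gt0 //; lra.
pose C' : R := Num.max 1 ((P `^ tau) ^+ 2 / (2 * c0)).
have C'1 : 1 <= C' by rewrite /C' le_max lexx.
have C'P : (P `^ tau) ^+ 2 / (2 * c0) <= C' by rewrite /C' le_max lexx orbT.
exists ((3 * D) `^ s * C'); split.
  by rewrite mulr_gt0 ?powR_gt0 //; clear -D0 C'1; lra.
move=> alpha0 [a01 Ka0 a0min] alpha n n1 n2 n3 a0le clsn nL1 nL3 hn Om0.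
subst n.
have a1 : (1 <= alpha)%N by apply: leq_trans a0le.
set n := n1 - n2 + n3 in clsn nL1 nL3 Om0 *.
set W := Omega A n1 n2 n3 n in Om0 *.
set N1 := nrm n1; set N2 := nrm n2; set N3 := nrm n3.
have N10 : 0 <= N1 := nrm_ge0 R _. have N20 : 0 <= N2 := nrm_ge0 R _.
have N30 : 0 <= N3 := nrm_ge0 R _.
set b1 := brk N1; set b2 := brk N2; set b3 := brk N3.
set T := star1 b1 b2 b3; set t := star2 b1 b2 b3.
set e := 4 * tau / c.
have [b1T b2T b3T] : [/\ b1 <= T, b2 <= T & b3 <= T] := star_le1 b1 b2 b3.
have t1 : 1 <= t.
  apply: le_trans (star3_le2 b1 b2 b3).
  by apply: star3_ge; apply: brk_ge1.
have t0 : 0 < t by clear -t1; lra.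
have N1b : N1 <= b1 := brk_ge N1. have N2b : N2 <= b2 := brk_ge N2.
have N3b : N3 <= b3 := brk_ge N3.
have b11 : 1 <= b1 := brk_ge1 N1. have b21 : 1 <= b2 := brk_ge1 N2.
have b31 : 1 <= b3 := brk_ge1 N3.
set K := Kal cls alpha.
have K0 : 0 <= K := Kal_ge0 R clsn.
have KT : K <= 3 * D * T.
  apply: le_trans (Kal_le R clsn) _; apply: le_trans (nrm_tri3 R _ _ _ d1) _.
  have h : N1 + N2 + N3 <= 3 * T by clear -N1b N2b N3b b1T b2T b3T; lra.
  rewrite [3 * D]mulrC -mulrA; apply: ler_wpM2l; [exact: ltW D0 | exact: h].
have Wpos : 0 < `|W| by rewrite normr_gt0.
have claim : `|W|^-1 <= C' * t `^ e.
  have e0 : 0 < e by rewrite /e divr_gt0 // mulr_gt0.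
  have te : 1 <= t `^ e by have := ler_powR t1 (ltW e0); rewrite powRr0.
  case: (lerP 1 `|W|) => W1.
    have : `|W|^-1 <= 1 by rewrite invf_le1.
    move=> h; apply: le_trans h _.
    clear -C'1 te; nra.
  have c2' : 1 <= 2 / c by rewrite ler_pdivlMr // mul1r.
  have tt : t <= t `^ (2 / c) := le1r_powR t1 c2'.
  case: (lerP T (L * t `^ (2 / c))) => hT.
  - have Wid : W = 2 * bform A (n1 - n2) (n2 - n3) := Omega_id n1 n2 n3 sA.
    have u0 : n1 - n2 != 0.
      apply: contra Om0 => /eqP hu; by rewrite Wid hu bform0l mulr0.
    have v0 : n2 - n3 != 0.
      apply: contra Om0 => /eqP hv; by rewrite Wid hv bform0r mulr0.
    have ha := adm _ _ u0 v0.
    rewrite !powRN in ha.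
    set Nu := nrm (n1 - n2) in ha; set Nv := nrm (n2 - n3) in ha.
    have Nu0 : 0 < Nu := nrm_pos R u0.
    have Nv0 : 0 < Nv := nrm_pos R v0.
    have tc0 : 0 <= t `^ (2 / c) := powR_ge0 _ _.
    have hNu : Nu <= P * t `^ (2 / c).
      apply: le_trans (nrm_tri2 R _ _ d1) _.
      have : N1 + N2 <= 2 * (L * t `^ (2 / c)) by clear -N1b N2b b1T b2T hT; lra.
      move=> h; rewrite /P -mulrA -mulrA mulrCA.
      apply: ler_wpM2l; [exact: ltW D0 | exact: h].
    have hNv : Nv <= P * t `^ (2 / c).
      apply: le_trans (nrm_tri2 R _ _ d1) _.
      have : N2 + N3 <= 2 * (L * t `^ (2 / c)) by clear -N3b N2b b3T b2T hT; lra.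
      move=> h; rewrite /P -mulrA -mulrA mulrCA.
      apply: ler_wpM2l; [exact: ltW D0 | exact: h].
    have pw : forall x, 0 <= x -> x <= P * t `^ (2 / c) ->
        x `^ tau <= P `^ tau * t `^ (2 / c * tau).
      move=> x x0 hx; rewrite powRrM -powRM ?(ltW P0) //.
      exact: powle (ltW tau0) x0 hx.
    have hu := pw _ (ltW Nu0) hNu; have hv := pw _ (ltW Nv0) hNv.
    set Y := Nu `^ tau * Nv `^ tau.
    have Y0 : 0 < Y by rewrite /Y mulr_gt0 // powR_gt0.
    rewrite -mulrA -invfM ler_pdivrMr // in ha.
    have h2 : 2 * c0 <= `|W| * Y.
      rewrite Wid normrM ger0_norm // -mulrA; apply: ler_wpM2l => //.
    have h3 : `|W|^-1 * (2 * c0) <= Y.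
      by rewrite -(ler_pM2l Wpos) mulrA mulfV ?gt_eqF // mul1r.
    have h4 : Y <= (P `^ tau) ^+ 2 * t `^ e.
      have -> : e = 2 / c * tau + 2 / c * tau by rewrite /e; field; rewrite gt_eqF.
      rewrite powRD; last by apply/implyP => _; rewrite gt_eqF.
      apply: le_trans (ler_pM _ _ hu hv) _; rewrite ?powR_ge0 //.
      by rewrite le_eqVlt; apply/orP; left; apply/eqP; ring.
    have c00 : 0 < 2 * c0 by rewrite mulr_gt0.
    have h5 : `|W|^-1 <= (P `^ tau) ^+ 2 / (2 * c0) * t `^ e.
      rewrite mulrAC ler_pdivlMr //; exact: le_trans h3 h4.
    apply: le_trans h5 _; apply: ler_wpM2r => //; exact: powR_ge0.
  - have L0 : 0 < L by clear -L1; lra.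
    have Lt : L * t <= L * t `^ (2 / c) by rewrite ler_wpM2l // ltW.
    have tLt : t <= L * t.
      have : 0 <= (L - 1) * t by apply: mulr_ge0; [rewrite subr_ge0 | apply: ltW].
      clear -t0; lra.
    have tT : t < T by clear -tLt Lt hT; lra.
    have key : B * t ^+ 2 <= (L * t `^ (2 / c)) `^ c.
      rewrite powRM ?(ltW L0) ?powR_ge0 // -powRrM.
      have -> : 2 / c * c = 2%:R by rewrite divfK // gt_eqF.
      rewrite powR_mulrn ?(ltW t0) // mulrC [X in _ <= X]mulrC.
      by apply: ler_wpM2l; [exact: sqr_ge0 | exact: LB].
    have tsq : t <= t ^+ 2.
      have : 0 <= (t - 1) * t by apply: mulr_ge0; [rewrite subr_ge0 | apply: ltW].
      rewrite expr2; clear -t0; lra.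
    have t21 : 1 <= t ^+ 2 by clear -t1 tsq; lra.
    have Bexp : B * t ^+ 2 = 2 * D * t ^+ 2 + 2 * M * t ^+ 2 + t ^+ 2.
      by rewrite /B; ring.
    have W1' : `|W| < 1 := W1.
    have Wd : W = lam2 A n1 - lam2 A n2 + lam2 A n3 - lam2 A n by [].
    have lb2 := lam_ub n2; have lb1 := lam_ub n1; have lb3 := lam_ub n3.
    rewrite -/N1 -/N2 -/N3 in lb1 lb2 lb3.
    have sq : forall x, 0 <= x -> x <= t -> M * x ^+ 2 <= M * t ^+ 2.
      move=> x x0 xt; apply: ler_wpM2l => //.
      by rewrite ler_sqr ?nnegrE // ltW.
    have Kh : forall m, cls m = alpha -> nrm m / 2 <= K.
      move=> m hm; apply: (Kal_ge hm) => m' hm'.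
      have := clsii alpha m m' a1 hm hm'.
      by rewrite ler_pdivrMr // mulrC.
    have L2Q : 0 <= L - 2 * Q by rewrite subr_ge0.
    have := star_split tT; rewrite -/T -/t.
    case=> [[e1 h2 h3]|[e2 h1 h3]|[e3 h1 h2]].
    + have hb : b1 = N1 by apply: brk_eq; rewrite -/b1; clear -e1 t1 tT; lra.
      have N1big : L * t `^ (2 / c) < N1 by clear -hb e1 hT; lra.
      have N2t : N2 <= t by clear -N2b h2; lra.
      have N3t : N3 <= t by clear -N3b h3; lra.
      have cls1 : cls n1 = alpha.
        apply/eqP/negPn/negP => hne.
        have hne' : cls n1 <> cls n by rewrite clsn; apply/eqP.
        have := clsiii _ _ hne'; rewrite gid1.
        have hA : nrm (n2 - n3) <= 2 * D * t.
          apply: le_trans (nrm_tri2 R _ _ d1) _.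
          rewrite -/N2 -/N3 -mulrA mulrCA; apply: ler_wpM2l; first exact: ltW D0.
          clear -N2t N3t; lra.
        have hB : `|lam2 A n1 - lam2 A n| <= 1 + 2 * M * t ^+ 2.
          have -> : lam2 A n1 - lam2 A n = W + lam2 A n2 - lam2 A n3 by rewrite Wd; ring.
          apply: le_trans (ler_normB _ _) _.
          apply: le_trans (lerD (ler_normD _ _) (lexx _)) _.
          have := sq _ N20 N2t; have := sq _ N30 N3t.
          clear -W1' lb2 lb3; lra.
        have hC : B * t ^+ 2 <= (N1 + nrm n) `^ c.
          apply: le_trans key (powle (ltW cpos) _ _); first exact: mulr_ge0 (ltW L0) (powR_ge0 _ _).
          have := nrm_ge0 R n; clear -N1big; lra.
        rewrite -/N1 => h.
        have : 2 * D * t <= 2 * D * t ^+ 2.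
          by apply: ler_wpM2l; [clear -D0; lra | exact: tsq].
        clear -h hA hB hC Bexp t21; lra.
      have K1 := Kh _ cls1; rewrite -/N1 in K1.
      exfalso; apply: nL1; split => //.
      * rewrite mulrC ltr_pdivlMr // -/Q -/N2 -/K.
        have : (L - 2 * Q) * t >= 0 by apply: mulr_ge0 => //; apply: ltW.
        have : (t - N2) * Q >= 0 by apply: mulr_ge0; [rewrite subr_ge0 | apply: ltW].
        clear -K1 N1big Lt; lra.
      * rewrite mulrC ltr_pdivlMr // -/Q -/N3 -/K.
        have : (L - 2 * Q) * t >= 0 by apply: mulr_ge0 => //; apply: ltW.
        have : (t - N3) * Q >= 0 by apply: mulr_ge0; [rewrite subr_ge0 | apply: ltW].
        clear -K1 N1big Lt; lra.
    + have hb : b2 = N2 by apply: brk_eq; rewrite -/b2; clear -e2 t1 tT; lra.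
      have N2big : L * t `^ (2 / c) < N2 by clear -hb e2 hT; lra.
      have N1t : N1 <= t by clear -N1b h1; lra.
      have N3t : N3 <= t by clear -N3b h3; lra.
      have hup : lam2 A n2 + lam2 A n < (2 * M + 1) * t ^+ 2.
        have -> : lam2 A n2 + lam2 A n = lam2 A n1 + lam2 A n3 - W by rewrite Wd; ring.
        have := sq _ N10 N1t; have := sq _ N30 N3t.
        have := ler_norm (lam2 A n1); have := ler_norm (lam2 A n3).
        have := ler_norm (- W); rewrite normrN.
        clear -lb1 lb3 W1' t21; lra.
      have l0 : 0 <= lam2 A n.
        apply: le_trans (lam_lb n); apply: mulr_ge0; last exact: sqr_ge0.
        by rewrite divr_ge0 // ltW.
      have h' : L * t <= N2 by clear -N2big Lt; lra.
      have hsq : L * t ^+ 2 <= N2 ^+ 2.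
        have : L * t * t <= N2 * N2.
          apply: ler_pM => //; first by apply: mulr_ge0; apply: ltW.
          - exact: ltW.
          - clear -h' tLt; lra.
        by rewrite !expr2 mulrA.
      have md0 : 0 <= mu / D by rewrite divr_ge0 // ltW.
      have hlo : (2 * M + 1) * t ^+ 2 <= lam2 A n2.
        apply: le_trans (lam_lb n2); rewrite -/N2.
        apply: le_trans (ler_wpM2l md0 hsq); rewrite [mu / D * _]mulrA.
        by apply: ler_wpM2r; [exact: sqr_ge0 | exact: LM].
      exfalso; clear -hup hlo l0; lra.
    + have hb : b3 = N3 by apply: brk_eq; rewrite -/b3; clear -e3 t1 tT; lra.
      have N3big : L * t `^ (2 / c) < N3 by clear -hb e3 hT; lra.
      have N1t : N1 <= t by clear -N1b h1; lra.
      have N2t : N2 <= t by clear -N2b h2; lra.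
      have cls3 : cls n3 = alpha.
        apply/eqP/negPn/negP => hne.
        have hne' : cls n3 <> cls n by rewrite clsn; apply/eqP.
        have := clsiii _ _ hne'; rewrite gid3.
        have hA : nrm (n2 - n1) <= 2 * D * t.
          apply: le_trans (nrm_tri2 R _ _ d1) _.
          rewrite -/N2 -/N1 -mulrA mulrCA; apply: ler_wpM2l; first exact: ltW D0.
          clear -N2t N1t; lra.
        have hB : `|lam2 A n3 - lam2 A n| <= 1 + 2 * M * t ^+ 2.
          have -> : lam2 A n3 - lam2 A n = W + lam2 A n2 - lam2 A n1 by rewrite Wd; ring.
          apply: le_trans (ler_normB _ _) _.
          apply: le_trans (lerD (ler_normD _ _) (lexx _)) _.
          have := sq _ N20 N2t; have := sq _ N10 N1t.
          clear -W1' lb2 lb1; lra.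
        have hC : B * t ^+ 2 <= (N3 + nrm n) `^ c.
          apply: le_trans key (powle (ltW cpos) _ _); first exact: mulr_ge0 (ltW L0) (powR_ge0 _ _).
          have := nrm_ge0 R n; clear -N3big; lra.
        rewrite -/N3 => h.
        have : 2 * D * t <= 2 * D * t ^+ 2.
          by apply: ler_wpM2l; [clear -D0; lra | exact: tsq].
        clear -h hA hB hC Bexp t21; lra.
      have K3 := Kh _ cls3; rewrite -/N3 in K3.
      exfalso; apply: nL3; split => //.
      * rewrite mulrC ltr_pdivlMr // -/Q -/N1 -/K.
        have : (L - 2 * Q) * t >= 0 by apply: mulr_ge0 => //; apply: ltW.
        have : (t - N1) * Q >= 0 by apply: mulr_ge0; [rewrite subr_ge0 | apply: ltW].
        clear -K3 N3big Lt; lra.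
      * rewrite mulrC ltr_pdivlMr // -/Q -/N2 -/K.
        have : (L - 2 * Q) * t >= 0 by apply: mulr_ge0 => //; apply: ltW.
        have : (t - N2) * Q >= 0 by apply: mulr_ge0; [rewrite subr_ge0 | apply: ltW].
        clear -K3 N3big Lt; lra.

have hKs : K `^ s <= (3 * D) `^ s * T `^ s.
  have T0 : 0 <= T by clear -b1T b11; lra.
  have D30 : 0 <= 3 * D by clear -D0; lra.
  rewrite -powRM //.
  by apply: ge0_ler_powR => //; rewrite nnegrE //; apply: mulr_ge0.
have Wi : 0 <= `|W|^-1 by rewrite invr_ge0 ltW.
have := ler_pM (powR_ge0 _ _) Wi hKs claim.
move=> h; apply: le_trans h _; rewrite le_eqVlt; apply/orP; left; apply/eqP.
ring.
Qed.
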